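(* Let $A$ be a finitely generated abelian group of torsion-free rank $k>0$ with a finite generating subset $S'$, and let $m$ be a fixed natural number. There exists a constant $C>0$ such that for every $\ell$, every group homomorphism $\varphi:\mathbb{Z}^\ell\to A$ and every generating subset $S$ of $\mathbb{Z}^\ell$ with $|S|\le m$, $$\|\ker(\varphi)\|_S\le C(\|\varphi\|_{S,S'})^k.$$ Moreover, there exists $m'$, not depending on $\varphi$, such that this bound is achieved by a generating subset of $\ker(\varphi)$ with at most $m'$ elements.
   Context: $\|\cdot\|_S$ is word length; $\|\varphi\|_{S,S'}=\max_{s\in S}\|\varphi(s)\|_{S'}$. For a subgroup $H$, $\|H\|_S=\min\{\max_{h\in X}\|h\|_S: X\text{ a finite generating subset of }H\}$. *)

(* Defs.v *)
From HB Require Import structures.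
From mathcomp Require Import all_boot all_order all_algebra.
From Stdlib Require Import ClassicalEpsilon.
Set Implicit Arguments. Unset Strict Implicit. Unset Printing Implicit Defensive.
Import Order.TTheory GRing.Theory Num.Theory.
Local Open Scope ring_scope.

(* Abelian groups are written additively (zmodType).  A word in the finite
   generating list S (and its inverses) evaluates to \sum_i c_i *~ S_i with
   c_i : int; its length is \sum_i |c_i|. *)

Definition wl_le (G : zmodType) (S : seq G) (g : G) (n : nat) : Prop :=
  exists c : seq int, size c = size S /\
    g = \sum_(i < size S) S`_i *~ c`_i /\
    (\sum_(i < size S) absz (nth 0%R c i) <= n)%N.

Definition in_span (G : zmodType) (S : seq G) (g : G) : Prop :=
  exists n, wl_le S g n.

Definition generates (G : zmodType) (S : seq G) : Prop :=
  forall g : G, in_span S g.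

(* word length ||g||_S : the least n with wl_le S g n (meaningful when g is
   in the span of S; otherwise an unspecified value). *)
Definition wordlen (G : zmodType) (S : seq G) (g : G) : nat :=
  epsilon (inhabits 0%N)
    (fun n => wl_le S g n /\ forall n', wl_le S g n' -> (n <= n')%N).

Definition opnorm (G H : zmodType) (phi : G -> H) (S : seq G) (S' : seq H)
  : nat := (\max_(s <- S) wordlen S' (phi s))%N.

Definition gen_by (G : zmodType) (X : seq G) (K : G -> Prop) : Prop :=
  (forall x, x \in X -> K x) /\ (forall h, K h -> in_span X h).

Definition subnorm (G : zmodType) (S : seq G) (K : G -> Prop) : nat :=
  epsilon (inhabits 0%N)
    (fun n => (exists X, gen_by X K /\ (\max_(x <- X) wordlen S x)%N = n) /\
       forall X, gen_by X K -> (n <= \max_(x <- X) wordlen S x)%N).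

Definition Zindep (A : zmodType) (n : nat) (v : 'I_n -> A) : Prop :=
  forall c : 'I_n -> int, \sum_(i < n) v i *~ c i = 0 -> forall i, c i = 0.

Definition tf_rank (A : zmodType) (k : nat) : Prop :=
  (exists v : 'I_k -> A, Zindep v) /\
  (forall v : 'I_k.+1 -> A, ~ Zindep v).

Definition is_hom (G H : zmodType) (phi : G -> H) : Prop :=
  forall x y, phi (x + y) = phi x + phi y.

(* Main.v *)
Require Import Defs.
From HB Require Import structures.
From mathcomp Require Import all_boot all_order all_algebra.
From Stdlib Require Import Classical ClassicalEpsilon.
From mathcomp Require Import zify ring lra.
From mathcomp Require Import perm.
Import Order.TTheory GRing.Theory Num.Theory.
Set Implicit Arguments. Unset Strict Implicit. Unset Printing Implicit Defensive.
Local Open Scope ring_scope.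

Lemma ex_minP (P : nat -> Prop) :
  (exists n, P n) -> exists n, P n /\ forall m, P m -> (n <= m)%N.
Proof.
move=> [n Pn]; elim: n {-2}n (leqnn n) Pn => [|b IH] n lenb Pn.
  exists n; split=> // m _; move: lenb; rewrite leqn0 => /eqP ->; done.
case: (classic (exists m, P m /\ (m < n)%N)) => [[m [Pm ltmn]]|nex].
  apply: (IH m) => //; rewrite -ltnS; exact: leq_trans ltmn lenb.
exists n; split=> // m Pm; rewrite leqNgt; apply/negP => ltmn; apply: nex; by exists m.
Qed.

Lemma ex_maxP (P : nat -> Prop) b :
  (exists n, P n) -> (forall n, P n -> (n <= b)%N) ->
  exists n, P n /\ forall m, P m -> (m <= n)%N.
Proof.
move=> [n0 Pn0] Pb.
have hex : exists d, P (b - d)%N /\ (d <= b)%N.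
  by exists (b - n0)%N; split; [rewrite subKn ?Pb | exact: leq_subr].
have [n [[Pn nb] nmin]] := ex_minP hex.
exists (b - n)%N; split=> // m Pm.
have h := nmin (b - m)%N (conj (eq_ind_r P Pm (subKn (Pb _ Pm))) (leq_subr _ _)).
have := Pb _ Pm; lia.
Qed.

Definition inspan (V : zmodType) (X : seq V) (y : V) : Prop :=
  exists c : nat -> int, y = \sum_(i < size X) X`_i *~ c i.

Section Span.
Variable V : zmodType.
Implicit Types (X Y : seq V) (x y : V).

Lemma inspan0 X : inspan X 0.
Proof. by exists (fun _ => 0); rewrite big1 // => i _; rewrite mulr0z. Qed.

Lemma inspanD X x y : inspan X x -> inspan X y -> inspan X (x + y).
Proof.
move=> [c ->] [d ->]; exists (fun i => c i + d i).
by rewrite -big_split; apply: eq_bigr => i _; rewrite mulrzDr.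
Qed.

Lemma inspanZ X x z : inspan X x -> inspan X (x *~ z).
Proof.
move=> [c ->]; exists (fun i => c i * z).
by rewrite mulrz_suml; apply: eq_bigr => i _; rewrite mulrzA.
Qed.

Lemma inspanN X x : inspan X x -> inspan X (- x).
Proof. by move=> h; rewrite -mulrN1z; apply: inspanZ. Qed.

Lemma inspanB X x y : inspan X x -> inspan X y -> inspan X (x - y).
Proof. by move=> hx hy; apply: inspanD => //; apply: inspanN. Qed.

Lemma inspan_mem X x : x \in X -> inspan X x.
Proof.
move=> xX; exists (fun i => (i == index x X)%:Z).
have hi : (index x X < size X)%N by rewrite index_mem.
rewrite (bigD1 (Ordinal hi)) //=.
rewrite nth_index // eqxx mulr1z big1 ?addr0 // => i /eqP ne.
have -> : (i == index x X :> nat) = false.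
  by apply/negP => /eqP h; apply: ne; apply: val_inj.
by rewrite mulr0z.
Qed.

Lemma inspan_sum X (I : Type) (r : seq I) (P : pred I) (F : I -> V) :
  (forall i, P i -> inspan X (F i)) -> inspan X (\sum_(i <- r | P i) F i).
Proof.
move=> h; apply: (big_ind (inspan X)) => //; [exact: inspan0 | exact: inspanD].
Qed.

Lemma inspan_trans X Y y : (forall x, x \in X -> inspan Y x) -> inspan X y -> inspan Y y.
Proof.
move=> hXY [c ->]; apply: inspan_sum => i _; apply: inspanZ; apply: hXY.
exact: mem_nth.
Qed.

Lemma inspan_cons X x y : inspan X y -> inspan (x :: X) y.
Proof.
apply: inspan_trans => z zX; apply: inspan_mem; by rewrite inE zX orbT.
Qed.

Lemma inspan_catl X Y y : inspan X y -> inspan (X ++ Y) y.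
Proof. apply: inspan_trans => z zX; apply: inspan_mem; by rewrite mem_cat zX. Qed.
Lemma inspan_catr X Y y : inspan Y y -> inspan (X ++ Y) y.
Proof. apply: inspan_trans => z zX; apply: inspan_mem; by rewrite mem_cat zX orbT. Qed.

End Span.

Lemma inspan_map (V W : zmodType) (f : {additive V -> W}) (X : seq V) y :
  inspan X y -> inspan (map f X) (f y).
Proof.
move=> [c ->]; rewrite raddf_sum; apply: inspan_sum => i _; rewrite raddfMz.
apply: inspanZ; apply: inspan_mem; apply: map_f; exact: mem_nth.
Qed.

Lemma span_closed (V : zmodType) (Q : V -> Prop) (X : seq V) y :
  Q 0 -> (forall a b, Q a -> Q b -> Q (a - b)) -> (forall x, x \in X -> Q x) ->
  inspan X y -> Q y.
Proof.
move=> Q0 QB QX [c ->].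
have QN a : Q a -> Q (- a) by move=> h; rewrite -sub0r; apply: QB.
have QA a b : Q a -> Q b -> Q (a + b) by move=> ha hb; rewrite -[b]opprK; apply: QB => //; apply: QN.
have QZ a z : Q a -> Q (a *~ z).
  move=> ha; case: z => m.
    elim: m => [|m IH]; first by rewrite mulr0z.
    by rewrite intS mulrzDr mulr1z; apply: QA.
  rewrite NegzE mulrNz; apply: QN.
  elim: m => [|m IH]; first by rewrite mulr1z.
  by rewrite intS mulrzDr mulr1z; apply: QA.
apply: (big_ind Q) => // i _; apply: QZ; apply: QX; exact: mem_nth.
Qed.

Lemma seq_choice (T U : Type) (dT : T) (dU : U) (R : T -> U -> Prop) (Y : seq T) :
  (forall i, (i < size Y)%N -> exists x, R (nth dT Y i) x) ->
  exists X : seq U, size X = size Y /\ forall i, (i < size Y)%N -> R (nth dT Y i) (nth dU X i).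
Proof.
elim: Y => [|y Y IH] h; first by exists [::].
have [x hx] := h 0%N isT.
have [X [sX hX]] := IH (fun i hi => h i.+1 hi).
by exists (x :: X); split; [rewrite /= sX | case].
Qed.

Lemma det_bound r (A : 'M[int]_r) (B : int) : 0 <= B ->
  (forall i j, `|A i j| <= B) -> `|\det A| <= (r`!)%:R * B ^+ r.
Proof.
move=> B0 hA; rewrite /determinant.
apply: le_trans (ler_norm_sum _ _ _) _.
have -> : (r`!)%:R * B ^+ r = \sum_(s : 'S_r) B ^+ r.
  by rewrite sumr_const card_Sn mulr_natl.
apply: ler_sum => s _; rewrite normrM normrX normrN1 expr1n mul1r normr_prod.
rewrite -[r in B ^+ r]card_ord -prodr_const.
by apply: ler_prod => i _; rewrite normr_ge0 hA.
Qed.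

Lemma cofactor_bound r (A : 'M[int]_r.+1) (B : int) : 0 <= B ->
  (forall i j, `|A i j| <= B) -> forall i j, `|cofactor A i j| <= (r`!)%:R * B ^+ r.
Proof.
move=> B0 hA i j; rewrite /cofactor normrM normrX normrN1 expr1n mul1r.
by apply: det_bound => // a b; rewrite !mxE.
Qed.

Lemma det_border r (A : 'M[int]_r) (b : 'M[int]_(r,1)) (c : 'M[int]_(1,r))
  (d : 'M[int]_1) : \det A != 0 ->
  \det (block_mx A b c d) = \det A * d 0 0 - (c *m \adj A *m b) 0 0.
Proof.
move=> nz.
pose E := block_mx 1%:M (- (\adj A *m b)) 0 (\det A)%:M : 'M[int]_(r + 1).
have hE : block_mx A b c d *m E =
    block_mx A 0 c ((\det A *: d) - c *m \adj A *m b).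
  rewrite mulmx_block !mulmx1 !mulmx0 !addr0 !mulmxN mulmxA mul_mx_adj.
  rewrite mul_scalar_mx mul_mx_scalar.
  by rewrite addNr mul_mx_scalar addrC mulmxA.
have := congr1 determinant hE.
rewrite det_mulmx det_ublock det1 mul1r det_scalar1 det_lblock det_mx11 !mxE.
by rewrite [X in X = _]mulrC => /(mulfI nz).
Qed.

Lemma adj_mul_bound r p (A : 'M[int]_r) (Q : 'M[int]_(r, p)) (B : int) : 0 <= B ->
  (forall i j, `|A i j| <= B) -> (forall i j, `|Q i j| <= B) ->
  forall a t, `|(\adj A *m Q) a t| <= (r`!)%:R * B ^+ r.
Proof.
case: r A Q => [|r] A Q B0 hA hQ a t; first by case: a.
rewrite mxE; apply: le_trans (ler_norm_sum _ _ _) _.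
have -> : ((r.+1)`!)%:R * B ^+ r.+1 = \sum_(b < r.+1) (r`!)%:R * B ^+ r * B.
  rewrite sumr_const card_ord factS natrM -mulr_natl exprSr; ring.
apply: ler_sum => b _; rewrite normrM; apply: ler_pM => //.
by rewrite mxE; apply: cofactor_bound.
Qed.

Definition ext (T : Type) r (f : 'I_r -> T) (x : T) : 'I_(r + 1) -> T :=
  fun u => match split u with inl a => f a | inr _ => x end.

Lemma mxsub_ext k n (M : 'M[int]_(k, n)) r (f : 'I_r -> 'I_k) (g : 'I_r -> 'I_n) i t :
  mxsub (ext f i) (ext g t) M =
  block_mx (mxsub f g M) (mxsub f (fun _ : 'I_1 => t) M)
           (mxsub (fun _ : 'I_1 => i) g M) (mxsub (fun _ : 'I_1 => i) (fun _ : 'I_1 => t) M).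
Proof.
apply/matrixP => u v; rewrite /ext !mxE.
by case: (split u) => a; rewrite !mxE; case: (split v) => b; rewrite !mxE.
Qed.

Definition piT n r (g : 'I_r -> 'I_n) (x : 'cV[int]_n) : 'cV[int]_n :=
  \col_t (if t \in codom g then 0 else x t 0).

Section Minor.
Variables (k n : nat) (M : 'M[int]_(k, n)).

Definition minor_ok r := exists (f : 'I_r -> 'I_k) (g : 'I_r -> 'I_n),
  \det (mxsub f g M) != 0.

Lemma minor_row_inj r (f : 'I_r -> 'I_k) (g : 'I_r -> 'I_n) :
  \det (mxsub f g M) != 0 -> injective f.
Proof.
move=> nz; apply/injectiveP; apply/negPn/negP => /injectivePn [x [y nxy fxy]].
by move: nz; rewrite (determinant_alternate nxy) ?eqxx // => j; rewrite !mxE fxy.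
Qed.

Lemma minor_col_inj r (f : 'I_r -> 'I_k) (g : 'I_r -> 'I_n) :
  \det (mxsub f g M) != 0 -> injective g.
Proof.
move=> nz; apply/injectiveP; apply/negPn/negP => /injectivePn [x [y nxy gxy]].
by move: nz; rewrite -det_tr (determinant_alternate nxy) ?eqxx // => j; rewrite !mxE gxy.
Qed.

Lemma minor_ok_le r : minor_ok r -> (r <= k)%N.
Proof.
move=> [f [g /minor_row_inj inj]]; have := leq_card f inj; by rewrite !card_ord.
Qed.

Lemma ker_rows r (f : 'I_r -> 'I_k) (g : 'I_r -> 'I_n) :
  (forall r', minor_ok r' -> (r' <= r)%N) -> \det (mxsub f g M) != 0 ->
  forall x : 'cV[int]_n, rowsub f M *m x = 0 -> M *m x = 0.
Proof.
move=> rmax nz x hx; apply/matrixP => i j; rewrite [RHS]mxE.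
apply/eqP; apply: contraT => hne.
set A := mxsub f g M.
pose w t := \det A * M i t - (mxsub (fun _ : 'I_1 => i) g M *m \adj A *m
                   mxsub f (fun _ : 'I_1 => t) M) 0 0.
have hw t : \det (mxsub (ext f i) (ext g t) M) = w t.
  by rewrite mxsub_ext det_border // mxE.
have e t : (mxsub (fun _ : 'I_1 => i) g M *m \adj A *m mxsub f (fun _ : 'I_1 => t) M) 0 0
    = (mxsub (fun _ : 'I_1 => i) g M *m \adj A *m rowsub f M) 0 t.
  by rewrite [LHS]mxE [RHS]mxE; apply: eq_bigr => a _; rewrite !mxE.
have h0 : \sum_t (mxsub (fun _ : 'I_1 => i) g M *m \adj A *m
                   mxsub f (fun _ : 'I_1 => t) M) 0 0 * x t j = 0.
  under eq_bigr do rewrite e.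
  transitivity ((mxsub (fun _ : 'I_1 => i) g M *m \adj A *m rowsub f M *m x) 0 j).
    by rewrite [RHS]mxE.
  by rewrite -mulmxA hx mulmx0 mxE.
have hsum : \sum_t w t * x t j = \det A * (M *m x) i j.
  rewrite [(M *m x) i j]mxE mulr_sumr.
  under eq_bigr do rewrite /w mulrBl.
  by rewrite sumrB h0 subr0; apply: eq_bigr => t _; rewrite mulrA.
have [t wt | wt0] := pickP (fun t => w t != 0).
  have : minor_ok (r + 1) by exists (ext f i), (ext g t); rewrite hw.
  by move/rmax; rewrite addn1 ltnn.
move: hsum; rewrite big1 => [|t _]; last by move: (wt0 t) => /= /negbFE/eqP ->; rewrite mul0r.
by move/esym/eqP; rewrite mulf_eq0 (negbTE nz) (negbTE hne).
Qed.

Lemma codom_sum r (g : 'I_r -> 'I_n) (F : 'I_n -> int) : injective g ->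
  \sum_(t | t \in codom g) F t = \sum_(b < r) F (g b).
Proof.
move=> inj; rewrite -big_uniq /=; last by rewrite map_inj_uniq ?enum_uniq // codomE.
by rewrite /codom big_image.
Qed.

Lemma split_mul r (f : 'I_r -> 'I_k) (g : 'I_r -> 'I_n) (x : 'cV[int]_n) :
  injective g ->
  rowsub f M *m x = mxsub f g M *m rowsub g x + rowsub f M *m piT g x.
Proof.
move=> inj; apply/matrixP => a j; rewrite !mxE.
rewrite (bigID (fun t => t \in codom g)) /=.
rewrite [X in _ = _ + X](bigID (fun t => t \in codom g)) /=.
rewrite [X in _ = _ + (X + _)]big1 => [|t tg]; last by rewrite !mxE tg mulr0.
rewrite add0r; congr (_ + _).
  rewrite codom_sum //; apply: eq_bigr => b _; rewrite !mxE.
  by have -> : j = 0 by apply: ord1.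
by apply: eq_bigr => t /negbTE tg; rewrite !mxE tg; have -> : j = 0 by apply: ord1.
Qed.

Lemma cramer r (f : 'I_r -> 'I_k) (g : 'I_r -> 'I_n) (x : 'cV[int]_n) :
  \det (mxsub f g M) != 0 ->
  (rowsub f M *m x = 0 <->
   \det (mxsub f g M) *: rowsub g x = - (\adj (mxsub f g M) *m rowsub f M) *m piT g x).
Proof.
move=> nz; have inj := minor_col_inj nz.
rewrite (split_mul f x inj); set A := mxsub f g M; split.
  move=> /eqP; rewrite addr_eq0 => /eqP h.
  by rewrite -mul_scalar_mx -mul_adj_mx -mulmxA h mulmxN mulNmx mulmxA.
move=> h.
suff : \det A *: (A *m rowsub g x + rowsub f M *m piT g x) = 0.
  by move/eqP; rewrite scalemx_eq0 (negbTE nz) => /eqP.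
rewrite scalerDr scalemxAr h mulNmx mulmxN !mulmxA mul_mx_adj mul_scalar_mx.
by rewrite scalemxAl addNr.
Qed.

End Minor.

Lemma kernel_data k n (M : 'M[int]_(k, n)) (B : int) : 0 <= B ->
  (forall i j, `|M i j| <= B) ->
  exists r (g : 'I_r -> 'I_n) (D : int) (P : 'M[int]_(r, n)),
  [/\ (r <= k)%N, injective g, D != 0,
      `|D| <= (r`!)%:R * B ^+ r /\ (forall a t, `|P a t| <= (r`!)%:R * B ^+ r) &
      forall x : 'cV[int]_n, M *m x = 0 <-> D *: rowsub g x = P *m piT g x].
Proof.
move=> B0 hM.
have ok0 : minor_ok M 0.
  by exists (fun i : 'I_0 => False_rect 'I_k (notF (ltn_ord i))),
            (fun i : 'I_0 => False_rect 'I_n (notF (ltn_ord i)));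
     rewrite det_mx00 oner_neq0.
have [r [[f [g nz]] rmax]] := ex_maxP (ex_intro (minor_ok M) 0%N ok0) (@minor_ok_le _ _ M).
exists r, g, (\det (mxsub f g M)), (- (\adj (mxsub f g M) *m rowsub f M)).
have hA : forall i j, `|mxsub f g M i j| <= B by move=> i j; rewrite mxE; exact: hM.
split.
- exact: minor_ok_le (ex_intro _ f (ex_intro _ g nz)).
- exact: minor_col_inj nz.
- exact: nz.
- split; first exact: det_bound.
  move=> a t; rewrite mxE normrN; apply: adj_mul_bound => // i j; rewrite mxE; exact: hM.
- move=> x; rewrite -cramer //; split; last exact: ker_rows rmax nz x.
  by move=> hx; rewrite rowsubE -mulmxA hx mulmx0.
Qed.

Lemma mxzE m n (x : 'M[int]_(m, n)) z i j : (x *~ z) i j = x i j * z.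
Proof. by rewrite -scaler_int mxE intz mulrC. Qed.

Section Lattice.
Variables (n : nat) (Lam : 'cV[int]_n -> Prop) (U : pred 'I_n) (D : int).
Hypotheses (D0 : 0 < D) (L0 : Lam 0) (LB : forall x y, Lam x -> Lam y -> Lam (x - y))
  (LU : forall y, Lam y -> forall i, ~~ U i -> y i 0 = 0)
  (LD : forall i, U i -> Lam (delta_mx i 0 *~ D)).

Lemma LN x : Lam x -> Lam (- x).
Proof. by move=> h; rewrite -sub0r; apply: LB. Qed.
Lemma LA x y : Lam x -> Lam y -> Lam (x + y).
Proof. by move=> hx hy; rewrite -[y]opprK; apply: LB => //; apply: LN. Qed.
Lemma LZ x z : Lam x -> Lam (x *~ z).
Proof.
move=> hx; case: z => m.
  elim: m => [|m IH]; first by rewrite mulr0z.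
  by rewrite intS mulrzDr mulr1z; apply: LA.
rewrite NegzE mulrNz; apply: LN.
elim: m => [|m IH]; first by rewrite mulr1z.
by rewrite intS mulrzDr mulr1z; apply: LA.
Qed.

Lemma reduce1 y i : Lam y -> U i -> exists y', Lam y' /\ y' i 0 = modz (y i 0) D /\
   forall i', i' != i -> y' i' 0 = y i' 0.
Proof.
move=> hy hi; exists (y - delta_mx i 0 *~ D *~ divz (y i 0) D); split.
  by apply: LB => //; apply: LZ; apply: LD.
rewrite !mxE !mxzE !mxE eqxx mul1r; split.
  by rewrite {1}(divz_eq (y i 0) D); ring.
by move=> i' /negbTE ne; rewrite !mxE !mxzE !mxE ne !mul0r subr0.
Qed.

Lemma reduce (s : seq 'I_n) y : Lam y -> all U s -> exists y', Lam y' /\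
  forall i, y' i 0 = if i \in s then modz (y i 0) D else y i 0.
Proof.
elim: s => [|a s IH] hy /=; first by move=> _; exists y.
move=> /andP [Ua Us]; have [y2 [Ly2 h2]] := IH hy Us.
have [y3 [Ly3 [h3a h3o]]] := reduce1 Ly2 Ua.
exists y3; split=> // i; rewrite inE.
case: (eqVneq i a) => [->|ne] /=.
  by rewrite h3a h2; case: (a \in s) => //; rewrite modz_mod.
by rewrite h3o // h2.
Qed.

Definition goodX (X : seq 'cV[int]_n) :=
  forall x, x \in X -> Lam x /\ forall i, 0 <= x i 0 <= D.

Lemma lattice_claim s : (s <= n)%N -> exists X, (size X <= s)%N /\ goodX X /\
  forall y, Lam y -> (forall i : 'I_n, (i < n - s)%N -> y i 0 = 0) -> inspan X y.
Proof.
elim: s => [|s IH] hs.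
  exists [::]; split=> //; split=> // y _ hy.
  have -> : y = 0.
    apply/matrixP => i j; rewrite (ord1 j) mxE; apply: hy; rewrite subn0; exact: ltn_ord.
  exact: inspan0.
have [X [sX [gX spX]]] := IH (ltnW hs).
have jn : (n - s.+1 < n)%N by lia.
pose j := Ordinal jn.
have hlt : forall i : 'I_n, (i < n - s)%N -> (i < j)%N \/ i = j.
  move=> i lti; have [h|h] := ltnP i j; [by left | right].
  apply: val_inj; move: h lti; rewrite /=; lia.
case Uj : (U j); last first.
  exists X; split; first exact: leqW.
  split=> // y Ly hy; apply: spX => // i /hlt [/hy //|->].
  by apply: LU => //; rewrite Uj.
pose G (g : nat) := (0 < g)%N /\ exists y, Lam y /\
   (forall i : 'I_n, (i < j)%N -> y i 0 = 0) /\ y j 0 = g%:Z.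
have Dpos : D = (`|D|%N)%:Z by rewrite gez0_abs // ltW.
have GD : G `|D|%N.
  split; first by rewrite -ltz_nat -Dpos.
  exists (delta_mx j 0 *~ D); split; first exact: LD.
  split; last by rewrite mxzE mxE eqxx mul1r.
  move=> i lti; rewrite mxzE mxE.
  have -> : (i == j) = false by apply/negP => /eqP eij; rewrite eij ltnn in lti.
  by rewrite mul0r.
have [ga [[gpos [y0 [Ly0 [y0z y0j]]]] gmin]] := ex_minP (ex_intro G _ GD).
have hs1 : all U [seq i <- enum 'I_n | U i && (j < i)%N].
  by apply/allP => i; rewrite mem_filter => /andP [/andP [-> _] _].
have [lam [Llam hlam]] := reduce Ly0 hs1.
have lamE i : lam i 0 = if U i && (j < i)%N then modz (y0 i 0) D else y0 i 0.
  by rewrite hlam mem_filter mem_enum andbT.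
exists (lam :: X); split; first by rewrite /= ltnS.
split.
  move=> x; rewrite inE => /orP [/eqP ->|xX]; last exact: gX.
  split=> // i; rewrite lamE.
  case: (ltngtP i j) => [ij|ji|ij] /=.
  - by rewrite andbF y0z // lexx ltW.
  - rewrite andbT; case Ui: (U i) => /=.
      by rewrite modz_ge0 ?gt_eqF //= ltW // -{2}(gtz0_abs D0) ltz_mod ?gt_eqF.
    rewrite LU ?Ui // lexx ltW //.
  - have -> : i = j by apply: val_inj.
    rewrite andbF y0j; apply/andP; split; first by [].
    rewrite Dpos lez_nat; exact: gmin.
move=> y Ly hy.
set q := divz (y j 0) ga%:Z.
set rr := modz (y j 0) ga%:Z.
have ga0 : ga%:Z != 0 by rewrite eqz_nat -lt0n.
have Lz : Lam (y - lam *~ q) by apply: LB => //; apply: LZ.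
have zlow : forall i : 'I_n, (i < j)%N -> (y - lam *~ q) i 0 = 0.
  move=> i lti; rewrite !mxE mxzE lamE hy // y0z //.
  by rewrite mod0z if_same mul0r subr0.
have zj : (y - lam *~ q) j 0 = rr.
  rewrite !mxE mxzE lamE ltnn andbF y0j /rr {1}(divz_eq (y j 0) ga%:Z) /q; ring.
have rr0 : rr = 0.
  apply/eqP; apply: contraT => rne.
  have rpos : 0 < rr by rewrite lt_def rne modz_ge0.
  have : G `|rr|%N.
    split; first by rewrite -ltz_nat gtz0_abs.
    by exists (y - lam *~ q); split=> //; split=> //; rewrite zj gtz0_abs.
  move/gmin; rewrite -lez_nat gtz0_abs // => h.
  have := ltz_mod (y j 0) ga0; rewrite /= -/rr => h2.
  by move: (le_lt_trans h h2); rewrite ltxx.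
have : inspan X (y - lam *~ q).
  apply: spX => // i /hlt [/zlow //|->]; by rewrite zj.
move=> hz; have -> : y = (y - lam *~ q) + lam *~ q by rewrite subrK.
apply: inspanD; first exact: inspan_cons.
by apply: inspanZ; apply: inspan_mem; rewrite inE eqxx.
Qed.

End Lattice.

Lemma latticeH n (Lam : 'cV[int]_n -> Prop) (U : pred 'I_n) (D : int) :
  0 < D -> Lam 0 -> (forall x y, Lam x -> Lam y -> Lam (x - y)) ->
  (forall y, Lam y -> forall i, ~~ U i -> y i 0 = 0) ->
  (forall i, U i -> Lam (delta_mx i 0 *~ D)) ->
  exists X : seq 'cV[int]_n, (size X <= n)%N /\
    (forall x, x \in X -> Lam x /\ forall i, 0 <= x i 0 <= D) /\
    (forall y, Lam y -> inspan X y).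
Proof.
move=> D0 L0 LB LU LD.
have [X [sX [gX spX]]] := lattice_claim D0 L0 LB LU LD (leqnn n).
exists X; split=> //; split=> // y Ly; apply: spX => // i; by rewrite subnn.
Qed.


Lemma mulmx_z m n p (A : 'M[int]_(m, n)) (x : 'M[int]_(n, p)) c :
  A *m (x *~ c) = (A *m x) *~ c.
Proof. by rewrite -!scaler_int scalemxAr. Qed.

Definition Dg n r (g : 'I_r -> 'I_n) : 'M[int]_n :=
  \matrix_(i, j) (if i \in codom g then 0 else (i == j)%:R).

Lemma piTE n r (g : 'I_r -> 'I_n) x : piT g x = Dg g *m x.
Proof.
apply/matrixP => i j; rewrite !mxE (ord1 j).
case: (boolP (i \in codom g)) => hi.
  by rewrite big1 // => t _; rewrite mxE hi mul0r.
rewrite (bigD1 i) //= big1 ?addr0 => [|t /negbTE ne]; rewrite mxE (negbTE hi).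
  by rewrite eqxx mul1r.
by rewrite eq_sym ne mul0r.
Qed.

Lemma lemK k n (M : 'M[int]_(k, n)) (B : int) : 1 <= B -> (forall i j, `|M i j| <= B) ->
  exists X : seq 'cV[int]_n, (size X <= n)%N /\
   (forall x, x \in X -> M *m x = 0 /\
        forall i, `|x i 0| <= (n.+1 * k`!)%:R * B ^+ k) /\
   (forall x, M *m x = 0 -> inspan X x).
Proof.
move=> B1 hM.
have B0 : 0 <= B by apply: le_trans B1.
have [r [g [D [P [rk ginj Dnz [Db Pb] kerE]]]]] := kernel_data B0 hM.
set E := (k`!)%:R * B ^+ k.
have rE : (r`!)%:R * B ^+ r <= E.
  apply: ler_pM => //; first exact: exprn_ge0.
    by rewrite ler_nat leq_fact.
  exact: ler_weXn2l.
have DE : `|D| <= E by apply: le_trans rE.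
have PE a t : `|P a t| <= E by apply: le_trans (Pb a t) rE.
pose Lam y := exists x, M *m x = 0 /\ piT g x = y.
pose U := [pred t | t \notin codom g].
have D0 : 0 < `|D| by rewrite normr_gt0.
have L0 : Lam 0 by exists 0; rewrite mulmx0 piTE mulmx0.
have LB x y : Lam x -> Lam y -> Lam (x - y).
  move=> [x1 [h1 <-]] [x2 [h2 <-]]; exists (x1 - x2).
  by rewrite mulmxBr h1 h2 subrr !piTE mulmxBr.
have LU y : Lam y -> forall i, ~~ U i -> y i 0 = 0.
  by move=> [x [_ <-]] i; rewrite negbK => hi; rewrite mxE hi.
have LDel t : U t -> Lam (delta_mx t 0 *~ D).
  move=> ht; pose x : 'cV[int]_n := delta_mx t 0 *~ D + \sum_a delta_mx (g a) 0 *~ P a t.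
  have xE i : x i 0 = (i == t)%:R * D + \sum_a (i == g a)%:R * P a t.
    rewrite !mxE summxE mxzE mxE andbT; congr (_ + _).
    by apply: eq_bigr => a _; rewrite mxzE mxE andbT.
  have hpi : piT g x = delta_mx t 0 *~ D.
    apply/matrixP => i j; rewrite (ord1 j) mxzE [piT g x i 0]mxE [delta_mx _ _ _ _]mxE eqxx andbT.
    case: (boolP (i \in codom g)) => hi.
      have -> : (i == t) = false by apply/negP => /eqP eit; move: ht; rewrite /= -eit hi.
      by rewrite mul0r.
    rewrite xE big1 ?addr0 // => a _.
    have -> : (i == g a) = false.
      by apply/negP => /eqP eia; move: hi; rewrite eia codom_f.
    by rewrite mul0r.
  exists x; split=> //; apply/kerE; rewrite hpi.
  apply/matrixP => b j; rewrite (ord1 j) [LHS]mxE [rowsub g x _ _]mxE xE [RHS]mxE.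
  have -> : (g b == t) = false.
    by apply/negP => /eqP ebt; move: ht; rewrite /= -ebt codom_f.
  rewrite mul0r add0r (bigD1 b) //= eqxx mul1r big1 ?addr0 => [|a /negbTE ne]; last first.
    by rewrite (inj_eq ginj) eq_sym ne mul0r.
  rewrite (bigD1 t) //= mxzE mxE eqxx mul1r big1 ?addr0 => [|t' /negbTE ne]; last first.
    by rewrite mxzE mxE ne mul0r mulr0.
  by rewrite mulrC.
have LD t : U t -> Lam (delta_mx t 0 *~ `|D|).
  move=> ht; have [Dp|Dn] := lerP 0 D; first by rewrite ger0_norm //; exact: LDel.
  by rewrite ltr0_norm // mulrNz -sub0r; apply: LB => //; apply: LDel.
have [Y [sY [gY spY]]] := latticeH D0 L0 LB LU LD.
have [X [sX hX]] := @seq_choice _ _ 0 0 (fun y x => M *m x = 0 /\ piT g x = y) Y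
   (fun i hi => (gY _ (mem_nth 0 hi)).1).
exists X; split; first by rewrite sX.
split.
  move=> x xX; have ix : (index x X < size Y)%N by rewrite -sX index_mem.
  have [Mx pix] := hX _ ix; rewrite nth_index // in Mx pix.
  have [_ yb] := gY _ (mem_nth 0 ix).
  split=> // i.
  have nE : (n.+1 * k`!)%:R * B ^+ k = (n.+1)%:R * E by rewrite /E natrM mulrA.
  rewrite nE.
  case: (boolP (i \in codom g)) => hi; last first.
    have : piT g x i 0 = x i 0 by rewrite mxE (negbTE hi).
    rewrite pix => <-; have /andP [y0 yD] := yb i.
    rewrite ger0_norm //; apply: (le_trans yD); apply: (le_trans DE).
    by rewrite -[E in E <= _]mul1r ler_wpM2r ?ler1n // (le_trans _ DE).
  have [b ->] := codomP hi.
  have := congr1 (fun m : 'cV[int]_r => m b 0) ((kerE x).1 Mx); rewrite pix !mxE => hb.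
  have : `|D| * `|x (g b) 0| <= `|D| * (n%:R * E).
    rewrite -normrM hb; apply: le_trans (ler_norm_sum _ _ _) _.
    rewrite mulrCA -[n in n%:R]card_ord -sumr_const.
    rewrite mulr_suml; apply: ler_sum => t _; rewrite mul1r.
    rewrite normrM mulrC; apply: ler_pM => //.
    by have /andP [y0 yD] := yb t; rewrite ger0_norm.
  rewrite ler_pM2l // => h; apply: le_trans h _.
  by rewrite ler_wpM2r ?ler_nat // (le_trans _ DE).
move=> x Mx.
have [c hc] := spY _ (ex_intro _ x (conj Mx erefl)).
pose z := x - \sum_(i < size X) X`_i *~ c i.
have Mz : M *m z = 0.
  rewrite mulmxBr Mx mulmx_sumr big1 ?subrr // => i _.
  by rewrite mulmx_z (hX i _).1 ?mul0rz // -sX.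
have pz : piT g z = 0.
  rewrite piTE mulmxBr -piTE hc mulmx_sumr sX; apply/eqP; rewrite subr_eq0; apply/eqP.
  by apply: eq_bigr => i _; rewrite mulmx_z -piTE (hX i _).2.
have rz : rowsub g z = 0.
  have := (kerE z).1 Mz; rewrite pz mulmx0 => /eqP.
  by rewrite scalemx_eq0 (negbTE Dnz) => /eqP.
have z0 : z = 0.
  apply/matrixP => i j; rewrite (ord1 j) [RHS]mxE.
  case: (boolP (i \in codom g)) => hi.
    have [b ->] := codomP hi.
    by have := congr1 (fun m : 'cV[int]_r => m b 0) rz; rewrite !mxE.
  by have := congr1 (fun m : 'cV[int]_n => m i 0) pz; rewrite !mxE (negbTE hi).
exists c; apply/eqP; rewrite -subr_eq0; apply/eqP; exact: z0.
Qed.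

Lemma ler_term_sum (I : finType) (F : I -> int) i0 :
  (forall i, 0 <= F i) -> F i0 <= \sum_i F i.
Proof. by move=> h; rewrite (bigD1 i0) //= lerDl sumr_ge0. Qed.

Section ALevel.
Variables (A : zmodType) (S' : seq A) (k : nat) (v : 'I_k -> A).
Hypotheses (vind : Zindep v) (vmax : forall w : 'I_k.+1 -> A, ~ Zindep w).

Lemma dep_coeffs (a : A) : exists p : int * ('I_k -> int),
  p.1 != 0 /\ a *~ p.1 = \sum_r v r *~ p.2 r.
Proof.
pose w (u : 'I_k.+1) : A := if (insub (val u) : option 'I_k) is Some r then v r else a.
have hw : forall c : 'I_k.+1 -> int, \sum_u w u *~ c u =
    \sum_(r < k) v r *~ c (widen_ord (leqnSn k) r) + a *~ c ord_max.
  move=> c; rewrite big_ord_recr /=; congr (_ + _).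
    by apply: eq_bigr => r _; rewrite /w /= valK.
  by rewrite /w /= insubN ?ltnn.
have : ~ forall c : 'I_k.+1 -> int, \sum_u w u *~ c u = 0 -> forall u, c u = 0 by apply: vmax.
move=> /not_all_ex_not [c] hnc.
have [hc nq] := imply_to_and _ _ hnc.
have [u cu] := not_all_ex_not _ _ nq.
rewrite hw in hc.
have cmax : c ord_max != 0.
  apply/negP => /eqP c0; rewrite c0 mulr0z addr0 in hc.
  have := vind hc => h; apply: cu.
  have [ltuk|] := ltnP u k.
    by have := h (Ordinal ltuk); rewrite /= (_ : widen_ord _ _ = u) //; apply: val_inj.
  move=> geuk; have -> : u = ord_max by apply: val_inj => /=; have := ltn_ord u; lia.
  exact: c0.
exists (c ord_max, fun r => - c (widen_ord (leqnSn k) r)); split=> //=.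
have -> : a *~ c ord_max = - \sum_(r < k) v r *~ c (widen_ord (leqnSn k) r).
  by apply/eqP; rewrite -addr_eq0 addrC hc.
by rewrite -sumrN; apply: eq_bigr => r _; rewrite mulrNz.
Qed.

Lemma consts : exists (N : int) (pi : nat -> 'I_k -> int), N != 0 /\
  forall j, (j < size S')%N -> S'`_j *~ N = \sum_r v r *~ pi j r.
Proof.
pose f j := proj1_sig (constructive_indefinite_description _ (dep_coeffs S'`_j)).
have hf j : (f j).1 != 0 /\ S'`_j *~ (f j).1 = \sum_r v r *~ (f j).2 r.
  exact: (proj2_sig (constructive_indefinite_description _ (dep_coeffs S'`_j))).
exists (\prod_(j < size S') (f j).1),
  (fun j r => (\prod_(j' < size S' | (j' != j :> nat)) (f j').1) * (f j).2 r).
split.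
  by rewrite prodf_seq_neq0; apply/allP => j _; apply/implyP => _; exact: (hf j).1.
move=> j hj; rewrite (bigD1 (Ordinal hj)) //= mulrzA (hf j).2 mulrz_suml.
apply: eq_bigr => r _; rewrite -mulrzA mulrC; congr (_ *~ (_ * _)).
Qed.

Definition psi n (a : 'I_n -> A) (c : 'cV[int]_n) : A := \sum_i a i *~ c i 0.

Lemma psi_lin n (a : 'I_n -> A) p (Y : 'I_p -> 'cV[int]_n) (z : 'I_p -> int) :
  psi a (\sum_(i < p) Y i *~ z i) = \sum_(i < p) psi a (Y i) *~ z i.
Proof.
rewrite /psi; under eq_bigr do rewrite summxE mulrz_sumr.
rewrite exchange_big; apply: eq_bigr => i _; rewrite mulrz_suml.
by apply: eq_bigr => i' _; rewrite mxzE mulrzA.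
Qed.

Lemma psiZ n (a : 'I_n -> A) y z : psi a (y *~ z) = psi a y *~ z.
Proof.
rewrite /psi mulrz_suml; apply: eq_bigr => i _; by rewrite mxzE mulrzA.
Qed.

Lemma psiB n (a : 'I_n -> A) x y : psi a (x - y) = psi a x - psi a y.
Proof.
rewrite /psi -sumrB; apply: eq_bigr => i _; by rewrite !mxE mulrzBr.
Qed.

Definition c0 (pi : nat -> 'I_k -> int) : int :=
  (\sum_(j < size S') \sum_r `|pi j r|) + 1.
Definition Kc (N : int) (pi : nat -> 'I_k -> int) n : int :=
  (n.+1 * `|N|%N * (n.+1 * k`!))%:R * c0 pi ^+ k.

Lemma lemA (N : int) (pi : nat -> 'I_k -> int) :
  N != 0 -> (forall j, (j < size S')%N -> S'`_j *~ N = \sum_r v r *~ pi j r) ->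
  forall n (a : 'I_n -> A) (L : nat), (0 < L)%N -> (forall i, wl_le S' (a i) L) ->
  exists X : seq 'cV[int]_n, (size X <= n + `|N| ^ n)%N /\
    (forall x, x \in X -> psi a x = 0 /\
        forall i, `|x i 0| <= Kc N pi n * (L%:R) ^+ k) /\
    (forall c : 'cV[int]_n, psi a c = 0 -> inspan X c).
Proof.
move=> Nnz hpi n a L L0 ha.
pose d i := proj1_sig (constructive_indefinite_description _ (ha i)).
have hd i : a i = \sum_(j < size S') S'`_j *~ (d i)`_j /\
            (\sum_(j < size S') absz (nth 0%R (d i) j) <= L)%N.
  by have [_ [h1 h2]] := proj2_sig (constructive_indefinite_description _ (ha i)).
pose M : 'M[int]_(k, n) := \matrix_(r, i) \sum_(j < size S') (d i)`_j * pi j r.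
set C0 := c0 pi.
have c01 : 1 <= C0 by rewrite /C0 /c0 lerDr sumr_ge0 // => j _; rewrite sumr_ge0.
have L1 : 1 <= (L%:R : int) by rewrite ler1n.
set B := (L%:R : int) * C0.
have B1 : 1 <= B by apply: mulr_ege1.
have pib (j : 'I_(size S')) r : `|pi j r| <= C0.
  have h1 : `|pi j r| <= \sum_r `|pi j r|.
    by rewrite (bigD1 r) //= lerDl sumr_ge0.
  have h2 : \sum_r `|pi j r| <= \sum_(j < size S') \sum_r `|pi j r|.
    by rewrite [X in _ <= X](bigD1 j) //= lerDl sumr_ge0 // => ? _; rewrite sumr_ge0.
  by rewrite /C0 /c0; apply: le_trans (le_trans h1 h2) _; rewrite lerDl.
have dsum i : \sum_(j < size S') `|(d i)`_j| <= (L%:R : int).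
  have := (hd i).2; rewrite -(ler_nat int) natr_sum => h; apply: le_trans h.
  by rewrite le_eqVlt; apply/orP; left; apply/eqP; apply: eq_bigr => j _; rewrite natz abszE.
have Mb r i : `|M r i| <= B.
  rewrite mxE; apply: le_trans (ler_norm_sum _ _ _) _.
  apply: (@le_trans _ _ (\sum_(j < size S') `|(d i)`_j| * C0)).
    by apply: ler_sum => j _; rewrite normrM; apply: ler_wpM2l => //.
  by rewrite -mulr_suml /B ler_wpM2r // (le_trans _ c01).
have [G [sG [hG spG]]] := lemK B1 Mb.
have rel c : psi a c *~ N = \sum_r v r *~ (M *m c) r 0.
  transitivity (\sum_i \sum_(j < size S') \sum_r v r *~ (pi j r * ((d i)`_j * c i 0))).
    rewrite /psi mulrz_suml; apply: eq_bigr => i _.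
    rewrite {1}(hd i).1 !mulrz_suml; apply: eq_bigr => j _.
    have -> : S'`_j *~ (d i)`_j *~ c i 0 *~ N = (S'`_j *~ N) *~ ((d i)`_j * c i 0).
      by rewrite -!mulrzA; congr (_ *~ _); ring.
    by rewrite hpi // mulrz_suml; apply: eq_bigr => r _; rewrite -mulrzA.
  under eq_bigr do rewrite exchange_big /=.
  rewrite exchange_big /=; apply: eq_bigr => r _.
  rewrite !mxE mulrz_sumr; apply: eq_bigr => i _.
  rewrite mxE mulr_suml mulrz_sumr; apply: eq_bigr => j _.
  by congr (_ *~ _); ring.
have hker c : psi a c = 0 -> M *m c = 0.
  move=> h; have := rel c; rewrite h mul0rz => /esym h2.
  apply/matrixP => r j; rewrite (ord1 j) [RHS]mxE.
  by have := vind h2 r.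
have hN c : M *m c = 0 -> psi a c *~ N = 0.
  by move=> h; rewrite rel h big1 // => r _; rewrite mxE mulr0z.
set Nn := `|N|%N.
have Nn0 : (0 < Nn)%N by rewrite absz_gt0.
have hN' c : M *m c = 0 -> psi a c *~ Nn%:Z = 0.
  move=> h; rewrite /Nn abszE; have [Np|Nneg] := lerP 0 N.
    by rewrite ger0_norm //; apply: hN.
  by rewrite ltr0_norm // mulrNz hN // oppr0.
set p := size G.
pose w (e : {ffun 'I_p -> 'I_Nn}) : 'cV[int]_n := \sum_(i < p) G`_i *~ (e i : nat)%:Z.
pose X1 := [seq g *~ Nn%:Z | g <- G].
pose X2 := [seq w e | e <- enum {ffun 'I_p -> 'I_Nn} & psi a (w e) == 0].
set K := (n.+1 * k`!)%:R * B ^+ k.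
have K0 : 0 <= K by rewrite mulr_ge0 // exprn_ge0 // (le_trans _ B1).
have KE : (n.+1)%:R * (Nn%:R * K) <= Kc N pi n * (L%:R) ^+ k.
  suff -> : Kc N pi n * (L%:R) ^+ k = (n.+1)%:R * (Nn%:R * K) by [].
  rewrite /Kc /K /B exprMn !natrM -/C0 /Nn; ring.
exists (X1 ++ X2); split.
  rewrite size_cat {1}/X1 size_map leq_add //.
  rewrite /X2 size_map size_filter; apply: leq_trans (count_size _ _) _.
  rewrite -cardE card_ffun !card_ord; apply: leq_pexp2l => //; exact: sG.
split.
  move=> x; rewrite mem_cat => /orP [].
    move=> /mapP [g gG ->]; have [Mg gb] := hG g gG; split; first by rewrite psiZ hN'.
    move=> i; rewrite mxzE normrM -natz normr_nat mulrC.
    apply: le_trans KE.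
    apply: (@le_trans _ _ (Nn%:R * K)); first by apply: ler_wpM2l => //; apply: gb.
    by apply: ler_peMl; [apply: mulr_ge0 | rewrite ler1n].
  move=> /mapP [e]; rewrite mem_filter => /andP [/eqP pe _] ->; split=> // i.
  rewrite /w summxE; apply: le_trans (ler_norm_sum _ _ _) _.
  apply: (@le_trans _ _ (\sum_(i0 < p) Nn%:R * K)).
    apply: ler_sum => i0 _; rewrite mxzE normrM mulrC -natz normr_nat; apply: ler_pM => //.
      by rewrite ler_nat; apply: ltnW.
    by have [_ gb] := hG _ (mem_nth 0 (ltn_ord i0)); apply: gb.
  rewrite sumr_const card_ord; apply: le_trans KE.
  rewrite -(mulr_natl (Nn%:R * K) p); apply: ler_wpM2r; first exact: mulr_ge0.
  by rewrite ler_nat; apply: leq_trans sG (leqnSn n).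
move=> c pc.
have [b hb] := spG c (hker c pc).
have em i : (absz (modz (b i) Nn%:Z) < Nn)%N.
  rewrite -ltz_nat abszE ger0_norm ?modz_ge0 //; last by rewrite eqz_nat -lt0n.
  have Nz : Nn%:Z != 0 by rewrite eqz_nat -lt0n.
  have nN : `|Nn%:Z| = Nn%:Z by rewrite -natz normr_nat.
  by have := ltz_mod (b i) Nz; rewrite nN.
pose e := [ffun i : 'I_p => Ordinal (em i)].
have eE i : ((e i : nat)%:Z) = modz (b i) Nn%:Z.
  by rewrite ffunE /= abszE ger0_norm // modz_ge0 // eqz_nat -lt0n.
pose q i := divz (b i) Nn%:Z.
have cE : c = \sum_(i < p) (G`_i *~ Nn%:Z) *~ q i + w e.
  rewrite hb /w -big_split /=; apply: eq_bigr => i _.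
  by rewrite eE -mulrzA -mulrzDr {1}(divz_eq (b i) Nn%:Z) /q mulrC.
have pw : psi a (w e) = 0.
  have -> : w e = c - \sum_(i < p) (G`_i *~ Nn%:Z) *~ q i by rewrite cE addrC addKr.
  rewrite psiB pc psi_lin big1 ?subrr // => i _.
  by rewrite psiZ hN' ?mul0rz //; have [] := hG _ (mem_nth 0 (ltn_ord i)).
rewrite cE; apply: inspanD.
  apply: inspan_catl; apply: inspan_sum => i _; apply: inspanZ; apply: inspan_mem.
  by apply: map_f; apply: mem_nth.
apply: inspan_catr; apply: inspan_mem; apply: map_f.
by rewrite mem_filter pw eqxx mem_enum.
Qed.

End ALevel.

Lemma wordlen_spec (G : zmodType) (S : seq G) g : in_span S g ->
  wl_le S g (wordlen S g) /\ forall n', wl_le S g n' -> (wordlen S g <= n')%N.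
Proof.
move=> h; have [n0 [h0 hmin]] := ex_minP h.
by apply: (epsilon_spec (inhabits 0%N) (fun n => wl_le S g n /\ _)); exists n0.
Qed.

Lemma wordlen_le (G : zmodType) (S : seq G) g b : wl_le S g b -> (wordlen S g <= b)%N.
Proof. by move=> h; apply: (wordlen_spec (ex_intro _ b h)).2. Qed.

Lemma wl_le_mono (G : zmodType) (S : seq G) g a b : wl_le S g a -> (a <= b)%N -> wl_le S g b.
Proof. by move=> [c [sc [-> hc]]] ab; exists c; split=> //; split=> //; apply: leq_trans ab. Qed.

Lemma inspan_in_span (G : zmodType) (X : seq G) y : inspan X y -> in_span X y.
Proof.
move=> [c ->]; exists (\sum_(i < size X) absz (c i)), (mkseq c (size X)).
split; first by rewrite size_mkseq.
split; first by apply: eq_bigr => i _; rewrite nth_mkseq.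
by rewrite leq_eqVlt; apply/orP; left; apply/eqP; apply: eq_bigr => i _; rewrite nth_mkseq.
Qed.

Lemma subnorm_le (G : zmodType) (S : seq G) (K : G -> Prop) X :
  gen_by X K -> (subnorm S K <= \max_(x <- X) wordlen S x)%N.
Proof.
move=> hX.
have [n0 [[X0 [g0 e0]] hmin]] := ex_minP (ex_intro (fun n => exists X, gen_by X K /\
       (\max_(x <- X) wordlen S x)%N = n) _ (ex_intro _ X (conj hX erefl))).
have := epsilon_spec (inhabits 0%N)
  (fun n => (exists X, gen_by X K /\ (\max_(x <- X) wordlen S x)%N = n) /\
       forall X, gen_by X K -> (n <= \max_(x <- X) wordlen S x)%N).
move=> /(_ _) [].
  exists n0; split; first by exists X0.
  by move=> X1 g1; apply: hmin; exists X1.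
by move=> _ h; apply: h.
Qed.

Section Hom.
Variables (G H : zmodType) (phi : G -> H).
Hypothesis hphi : is_hom phi.
Lemma phi0 : phi 0 = 0.
Proof. by apply: (addrI (phi 0)); rewrite [RHS]addr0 -hphi addr0. Qed.
Lemma phiN x : phi (- x) = - phi x.
Proof. by apply/eqP; rewrite -addr_eq0 -hphi addNr phi0. Qed.
Lemma phiZ x z : phi (x *~ z) = phi x *~ z.
Proof.
case: z => m.
  elim: m => [|m IH]; first by rewrite !mulr0z phi0.
  by rewrite intS !mulrzDr !mulr1z hphi IH.
rewrite NegzE !mulrNz phiN; congr (- _).
elim: m => [|m IH]; first by rewrite !mulr1z.
by rewrite intS !mulrzDr !mulr1z hphi IH.
Qed.
Lemma phi_sum (I : Type) (r : seq I) (P : pred I) (F : I -> G) :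
  phi (\sum_(i <- r | P i) F i) = \sum_(i <- r | P i) phi (F i).
Proof.
elim: r => [|x r IH]; first by rewrite !big_nil phi0.
by rewrite !big_cons; case: (P x); rewrite ?hphi IH.
Qed.
End Hom.

Lemma mainTheorem11_aux (A : zmodType) (S' : seq A) (k m : nat) :
  generates S' -> tf_rank A k -> (0 < k)%N ->
  exists C : nat, (0 < C)%N /\
    (forall (l : nat) (phi : 'rV[int]_l -> A) (S : seq 'rV[int]_l),
        is_hom phi -> generates S -> (size S <= m)%N ->
        (subnorm S (fun v => phi v = 0%R) <= C * (maxn 1 (opnorm phi S S')) ^ k)%N) /\
    (exists m' : nat,
      forall (l : nat) (phi : 'rV[int]_l -> A) (S : seq 'rV[int]_l),
        is_hom phi -> generates S -> (size S <= m)%N ->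
        exists X : seq 'rV[int]_l,
          gen_by X (fun v => phi v = 0%R) /\ (size X <= m')%N /\
          (\max_(x <- X) wordlen S x <= C * (maxn 1 (opnorm phi S S')) ^ k)%N).
Proof.
move=> hS' [[v vind] vmax] k0.
have [N [pi [Nnz hpi]]] := consts S' vind vmax.
set Nn := `|N|%N.
have Nn0 : (0 < Nn)%N by rewrite absz_gt0.
set C0 := c0 S' pi.
have C01 : 1 <= C0 by rewrite /C0 /c0 lerDr sumr_ge0 // => j _; rewrite sumr_ge0.
set Cn := (m * (m.+1 * Nn * (m.+1 * k`!)) * absz C0 ^ k).+1.
have hCn n : (n <= m)%N -> (n%:R * Kc S' N pi n <= (Cn%:R : int)).
  move=> nm; rewrite /Kc -/C0.
  have -> : C0 = (absz C0)%:R by rewrite natz abszE ger0_norm // (le_trans _ C01).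
  rewrite -natrX -!natrM ler_nat; apply: leqW; rewrite mulnA.
  apply: leq_mul => //; apply: leq_mul => //; apply: leq_mul; first by apply: leq_mul.
  by apply: leq_mul => //; rewrite ltnS.
have main : forall (l : nat) (phi : 'rV[int]_l -> A) (S : seq 'rV[int]_l),
    is_hom phi -> generates S -> (size S <= m)%N ->
    exists X : seq 'rV[int]_l,
      gen_by X (fun v => phi v = 0%R) /\ (size X <= m + Nn ^ m)%N /\
      (\max_(x <- X) wordlen S x <= Cn * (maxn 1 (opnorm phi S S')) ^ k)%N.
  move=> l phi S hphi hS hm.
  set L := maxn 1 (opnorm phi S S').
  have L0 : (0 < L)%N by rewrite leq_maxl.
  pose a (i : 'I_(size S)) := phi S`_i.
  have ha i : wl_le S' (a i) L.
    have [h1 _] := wordlen_spec (hS' (a i)).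
    apply: wl_le_mono h1 _; apply: leq_trans (leq_maxr 1 _).
    rewrite /opnorm; apply: (leq_bigmax_seq (F := fun s => wordlen S' (phi s))) => //.
    exact: mem_nth.
  have [X [sX [hX spX]]] := lemA vind Nnz hpi L0 ha.
  pose T (x : 'cV[int]_(size S)) := psi (fun i : 'I_(size S) => S`_i) x.
  have phiT x : phi (T x) = psi a x.
    by rewrite /T /psi (phi_sum hphi); apply: eq_bigr => i _; rewrite (phiZ hphi).
  exists (map T X); split; [|split].
  - split.
      by move=> y /mapP [x xX ->]; rewrite phiT (hX x xX).1.
    move=> h hk; have [n0 [c [sc [hc _]]]] := hS h.
    pose cv : 'cV[int]_(size S) := \col_i c`_i.
    have Tcv : T cv = h by rewrite hc /T /psi; apply: eq_bigr => i _; rewrite mxE.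
    have pcv : psi a cv = 0 by rewrite -phiT Tcv hk.
    have [b hb] := spX cv pcv.
    apply: inspan_in_span; exists b.
    rewrite -Tcv hb /T psi_lin size_map; apply: eq_bigr => i _.
    by rewrite (nth_map 0).
  - rewrite size_map; apply: leq_trans sX _; apply: leq_add => //.
    exact: leq_pexp2l.
  apply/bigmax_leqP_seq => y /mapP [x xX ->] _.
  have [_ xb] := hX x xX.
  pose f i := absz (x i 0).
  apply: (@leq_trans (\sum_(i < size S) f i)%N).
    apply: wordlen_le; exists (map (fun i => x i 0) (enum 'I_(size S))).
    split; first by rewrite size_map size_enum_ord.
    split.
      by rewrite /T /psi; apply: eq_bigr => i _; rewrite (nth_map i) ?size_enum_ord // nth_ord_enum.
    apply: eq_leq; apply: eq_bigr => i _.
    by rewrite (nth_map i) ?size_enum_ord // nth_ord_enum.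
  rewrite -(ler_nat int) natr_sum natrM natrX.
  apply: (@le_trans _ _ (\sum_(i < size S) Kc S' N pi (size S) * (L%:R) ^+ k)).
    by apply: ler_sum => i _; rewrite /f [X in X <= _]natz abszE; apply: xb.
  rewrite sumr_const card_ord -(mulr_natl (Kc S' N pi (size S) * L%:R ^+ k)) mulrA.
  by apply: ler_wpM2r; [exact: exprn_ge0 | exact: hCn].
exists Cn; split=> //; split.
  move=> l phi S hphi hS hm; have [X [gX [_ mX]]] := main l phi S hphi hS hm.
  exact: leq_trans (subnorm_le S gX) mX.
by exists (m + Nn ^ m)%N.
Qed.

Local Close Scope ring_scope.
Unset Implicit Arguments.
Set Strict Implicit.

Theorem mainTheorem11 (A : zmodType) (S' : seq A) (k m : nat) :
  generates S' -> tf_rank A k -> (0 < k)%N ->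
  exists C : nat, (0 < C)%N /\
    (forall (l : nat) (phi : 'rV[int]_l -> A) (S : seq 'rV[int]_l),
        is_hom phi -> generates S -> (size S <= m)%N ->
        (subnorm S (fun v => phi v = 0%R) <= C * (maxn 1 (opnorm phi S S')) ^ k)%N) /\
    (exists m' : nat,
      forall (l : nat) (phi : 'rV[int]_l -> A) (S : seq 'rV[int]_l),
        is_hom phi -> generates S -> (size S <= m)%N ->
        exists X : seq 'rV[int]_l,
          gen_by X (fun v => phi v = 0%R) /\ (size X <= m')%N /\
          (\max_(x <- X) wordlen S x <= C * (maxn 1 (opnorm phi S S')) ^ k)%N).
Proof. exact: mainTheorem11_aux. Qed.
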